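(* For every integer $m\ge 0$, $$\mathrm{Li}_{2,\{1\}_m}\!\left(\tfrac12\right)=\zeta(m+2)-\sum_{l=0}^{m+1}\frac{(\ln 2)^{m+1-l}}{(m+1-l)!}\mathrm{Li}_{l+1}\!\left(\tfrac12\right),$$ and $$\zeta(\bar 1,\{1\}_m,\bar 1)=(-1)^{m+1}\left\{\zeta(m+2)-\sum_{l=0}^{m+1}\frac{(\ln 2)^{m+1-l}}{(m+1-l)!}\mathrm{Li}_{l+1}\!\left(\tfrac12\right)\right\}.$$
   Context: For nonzero integers $s_1,\dots,s_k$, with $\operatorname{sgn}(s)=1$ if $s>0$ and $-1$ if $s<0$, the multiple zeta value is $\zeta(s_1,\dots,s_k)=\sum_{n_1>n_2>\cdots>n_k\ge 1}\prod_{j=1}^k n_j^{-|s_j|}\operatorname{sgn}(s_j)^{n_j}$. A barred entry $\bar p$ denotes the negative entry $-p$. The notation $\{1\}_m$ means the entry $1$ repeated $m$ times. $\zeta(s)=\sum_{n\ge1}n^{-s}$ is the Riemann zeta function, $\mathrm{Li}_s(x)=\sum_{n\ge1}x^n/n^s$ the polylogarithm, and for positive integers $s_1,\dots,s_r$ and $0\le x<1$, $\mathrm{Li}_{s_1,\dots,s_r}(x)=\sum_{n_1>\cdots>n_r>0}\frac{x^{n_1}}{n_1^{s_1}\cdots n_r^{s_r}}$. *)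

(* Defs.v *)
From Stdlib Require Import Reals ZArith List.
From Coquelicot Require Import Coquelicot.
Open Scope R_scope.

Definition mzv_term (s : Z) (n : nat) : R :=
  (if Z.ltb 0 s then 1 else -1) ^ n / (INR n) ^ (Z.abs_nat s).

(* Truncated nested sum:
   nsum [s1;...;sk] N = sum_{N >= n1 > n2 > ... > nk >= 1} prod_j sgn(s_j)^{n_j} / n_j^{|s_j|}
   (nsum [] N = 1). *)
Fixpoint nsum (s : list Z) (N : nat) : R :=
  match s with
  | nil => 1
  | s1 :: rest =>
      (fix go (M : nat) : R :=
         match M with
         | O => 0
         | S k => go k + mzv_term s1 (S k) * nsum rest k
         end) N
  end.

Definition mzv (s : list Z) : R := real (Lim_seq (nsum s)).

Definition zeta (k : nat) : R := mzv (Z.of_nat k :: nil).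

(* Truncated multiple polylogarithm, positive integer indices:
   li_partial [s1;...;sr] x N = sum_{N >= n1 > ... > nr > 0} x^{n1} / (n1^{s1} ... nr^{sr}) *)
Definition li_partial (s : list nat) (x : R) (N : nat) : R :=
  match s with
  | nil => 1
  | s1 :: rest =>
      (fix go (M : nat) : R :=
         match M with
         | O => 0
         | S k => go k + x ^ (S k) / (INR (S k)) ^ s1 * nsum (map Z.of_nat rest) k
         end) N
  end.

Definition mpolylog (s : list nat) (x : R) : R := real (Lim_seq (li_partial s x)).
Definition polylog (k : nat) (x : R) : R := mpolylog (k :: nil) x.

(* Main.v *)
Require Import Defs.
From Stdlib Require Import Reals ZArith List Lra Lia.
From Coquelicot Require Import Coquelicot.
Open Scope R_scope.

Definition cf (s : list Z) (n : nat) : R :=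
  match s with
  | nil => if Nat.eqb n 0 then 1 else 0
  | s1 :: r => match n with O => 0 | S k => mzv_term s1 n * nsum r k end
  end.

Lemma sum_SnR (a : nat -> R) n : sum_n a (S n) = sum_n a n + a (S n).
Proof. rewrite sum_Sn. reflexivity. Qed.

Lemma sum_OR (a : nat -> R) : sum_n a 0 = a 0%nat.
Proof. apply sum_O. Qed.

Lemma nsum_S s1 r k : nsum (s1 :: r) (S k) = nsum (s1 :: r) k + mzv_term s1 (S k) * nsum r k.
Proof. reflexivity. Qed.

Lemma nsum_cf s N : nsum s N = sum_n (cf s) N.
Proof.
  destruct s as [|s1 r].
  - induction N. rewrite sum_O. reflexivity.
    rewrite sum_Sn, <- IHN. simpl. unfold plus; simpl. ring.
  - induction N. rewrite sum_O. reflexivity.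
    rewrite sum_Sn, <- IHN, nsum_S. reflexivity.
Qed.

Lemma li_S s1 r x k : li_partial (s1 :: r) x (S k) =
  li_partial (s1 :: r) x k + x ^ (S k) / (INR (S k)) ^ s1 * nsum (map Z.of_nat r) k.
Proof. reflexivity. Qed.

Lemma mzv_term_pos s n : (0 < s)%Z -> mzv_term s n = / INR n ^ (Z.to_nat s).
Proof.
  intros H. unfold mzv_term. replace (0 <? s)%Z with true by (symmetry; apply Z.ltb_lt; lia).
  rewrite pow1. replace (Z.abs_nat s) with (Z.to_nat s) by lia. unfold Rdiv. ring.
Qed.

Lemma li_partial_cf s1 r x N : (1 <= s1)%nat ->
  li_partial (s1 :: r) x N = sum_n (fun n => cf (Z.of_nat s1 :: map Z.of_nat r) n * x ^ n) N.
Proof.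
  intros H. induction N.
  - rewrite sum_O. simpl. ring.
  - rewrite sum_SnR, <- IHN, li_S. unfold cf.
    rewrite mzv_term_pos by lia. rewrite Nat2Z.id. unfold Rdiv. ring.
Qed.

Lemma mzv_term_abs s n : (1 <= n)%nat -> Rabs (mzv_term s n) <= / INR n \/ s = 0%Z.
Proof.
  intros Hn. destruct (Z.eq_dec s 0) as [->|Hs]; [right; reflexivity|left].
  unfold mzv_term. rewrite Rabs_div.
  2:{ apply pow_nonzero. apply not_0_INR; lia. }
  assert (Rabs ((if (0 <? s)%Z then 1 else -1) ^ n) = 1).
  { rewrite <- RPow_abs. destruct (0 <? s)%Z; rewrite ?Rabs_R1, ?Rabs_m1, pow1; reflexivity. }
  rewrite H. rewrite Rabs_pos_eq by (apply pow_le; apply pos_INR).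
  unfold Rdiv. rewrite Rmult_1_l. apply Rinv_le_contravar. apply lt_0_INR; lia.
  assert (1 <= Z.abs_nat s)%nat by lia.
  destruct (Z.abs_nat s) as [|k]. lia. simpl.
  rewrite <- (Rmult_1_r (INR n)) at 1. apply Rmult_le_compat_l. apply pos_INR.
  apply pow_R1_Rle. apply (le_INR 1); lia.
Qed.

Definition nzl (s : list Z) := List.Forall (fun z => z <> 0%Z) s.

Lemma nsum_bound s N : nzl s -> Rabs (nsum s N) <= INR N + 1.
Proof.
  revert N. induction s as [|s1 r IH]; intros N Hs.
  - simpl. rewrite Rabs_R1. pose proof (pos_INR N). lra.
  - inversion Hs; subst. induction N.
    + simpl. rewrite Rabs_R0. lra.
    + rewrite nsum_S. eapply Rle_trans. apply Rabs_triang.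
      rewrite Rabs_mult. rewrite S_INR.
      destruct (mzv_term_abs s1 (S N)) as [Hm|Hm]; [lia| |congruence].
      assert (Rabs (mzv_term s1 (S N)) * Rabs (nsum r N) <= 1).
      { eapply Rle_trans. apply Rmult_le_compat; try apply Rabs_pos. exact Hm. apply IH; auto.
        rewrite S_INR. right. field. pose proof (pos_INR N). lra. }
      lra.
Qed.

Lemma cf_bound s n : nzl s -> Rabs (cf s n) <= 1.
Proof.
  intros Hs. destruct s as [|s1 r].
  - simpl. destruct (Nat.eqb n 0); rewrite ?Rabs_R1, ?Rabs_R0; lra.
  - inversion Hs; subst. destruct n as [|k]. simpl. rewrite Rabs_R0; lra.
    unfold cf. rewrite Rabs_mult.
    destruct (mzv_term_abs s1 (S k)) as [Hm|Hm]; [lia| |congruence].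
    eapply Rle_trans. apply Rmult_le_compat; try apply Rabs_pos. exact Hm. apply nsum_bound; auto.
    rewrite S_INR. right. field. pose proof (pos_INR k). lra.
Qed.

Lemma cf_radius s : nzl s -> Rbar_le 1 (CV_radius (cf s)).
Proof.
  intros Hs. destruct (CV_radius_bounded (cf s)) as [Hub _].
  apply Hub. exists 1. intros n. rewrite pow1, Rmult_1_r. apply cf_bound; auto.
Qed.

Lemma cf_inside s x : nzl s -> Rabs x < 1 -> Rbar_lt (Rabs x) (CV_radius (cf s)).
Proof.
  intros Hs Hx. eapply Rbar_lt_le_trans. 2: apply cf_radius; auto. simpl. exact Hx.
Qed.

Lemma PSeries_alt (a : nat -> R) x : PSeries (fun n => (-1)^n * a n) x = PSeries a (-x).
Proof.
  unfold PSeries. apply Series_ext. intros n.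
  replace (-x) with ((-1) * x) by ring. rewrite Rpow_mult_distr. ring.
Qed.

Lemma PSeries_nil x : Rabs x < 1 -> PSeries (cf nil) x = 1.
Proof.
  intros Hx. rewrite (PSeries_decr_1 (cf nil)). rewrite PSeries_ext with (b := fun _ => 0).
  rewrite PSeries_const_0. simpl. ring.
  intros n. reflexivity.
  apply CV_radius_inside. apply cf_inside; auto. constructor.
Qed.

Lemma const_on (f : R -> R) a b : (forall x, a < x < b -> is_derive f x 0) ->
  forall x y, a < x < b -> a < y < b -> f x = f y.
Proof.
  intros Hd x y Hx Hy.
  destruct (MVT_gen f x y (fun _ => 0)) as [c [_ Hc]].
  - intros z Hz. apply Hd. split.
    + apply Rlt_le_trans with (Rmin x y). apply Rmin_glb_lt; lra. lra.
    + apply Rle_lt_trans with (Rmax x y). lra. apply Rmax_lub_lt; lra.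
  - intros z Hz. apply continuity_pt_filterlim. apply (ex_derive_continuous (K:=R_AbsRing) (V:=R_NormedModule) f z).
    eexists. apply Hd. split.
    + apply Rlt_le_trans with (Rmin x y). apply Rmin_glb_lt; lra. lra.
    + apply Rle_lt_trans with (Rmax x y). lra. apply Rmax_lub_lt; lra.
  - rewrite Rmult_0_l in Hc. lra.
Qed.

Definition F (s : list Z) (x : R) := PSeries (cf s) x.

Lemma F_deriv s x : nzl s -> Rabs x < 1 -> is_derive (F s) x (PSeries (PS_derive (cf s)) x).
Proof. intros. apply is_derive_PSeries. apply cf_inside; auto. Qed.

Lemma PSeries_ext_R (a b : nat -> R) x : (forall n, a n = b n) -> PSeries a x = PSeries b x.
Proof. intros; apply PSeries_ext; auto. Qed.

Lemma INR_S_pos n : 0 < INR (S n).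
Proof. apply lt_0_INR; lia. Qed.

Lemma rel1 r x : nzl r -> Rabs x < 1 ->
  (1 - x) * PSeries (PS_derive (cf (1%Z :: r))) x = PSeries (cf r) x.
Proof.
  intros Hr Hx.
  assert (Hs : nzl (1%Z :: r)) by (constructor; auto; lia).
  assert (HP : forall n, PS_derive (cf (1%Z :: r)) n = sum_n (cf r) n).
  { intros n. unfold PS_derive. change (cf (1%Z :: r) (S n)) with (mzv_term 1 (S n) * nsum r n).
    rewrite mzv_term_pos by lia. change (Z.to_nat 1) with 1%nat.
    rewrite nsum_cf. pose proof (INR_S_pos n). field. lra. }
  rewrite (PSeries_ext_R _ _ x HP).
  set (P := sum_n (cf r)).
  assert (Hex : ex_pseries P x).
  { eapply ex_pseries_ext. apply HP. apply ex_pseries_derive. apply cf_inside; auto. }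
  replace ((1 - x) * PSeries P x) with (PSeries P x - x * PSeries P x) by ring.
  rewrite <- (PSeries_incr_1 P x). rewrite <- PSeries_minus; auto.
  2: { apply ex_pseries_incr_1; auto. }
  apply PSeries_ext_R. intros [|n]; unfold PS_minus, PS_incr_1, P; simpl.
  - rewrite sum_OR. unfold plus, opp, zero; simpl. ring.
  - rewrite sum_SnR. unfold plus, opp; simpl. ring.
Qed.

Lemma rel2 k r x : (1 <= k)%nat ->
  x * PSeries (PS_derive (cf (Z.of_nat (S k) :: r))) x = PSeries (cf (Z.of_nat k :: r)) x.
Proof.
  intros Hk. rewrite <- (PSeries_incr_1 (PS_derive (cf (Z.of_nat (S k) :: r))) x). apply PSeries_ext_R. intros [|n]; unfold PS_incr_1.
  - reflexivity.
  - unfold PS_derive. change (cf (Z.of_nat (S k) :: r) (S n)) with (mzv_term (Z.of_nat (S k)) (S n) * nsum r n).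
    change (cf (Z.of_nat k :: r) (S n)) with (mzv_term (Z.of_nat k) (S n) * nsum r n).
    rewrite !mzv_term_pos by lia. rewrite !Nat2Z.id.
    rewrite <- tech_pow_Rmult. pose proof (INR_S_pos n). field. split; try lra. apply pow_nonzero. lra.
Qed.

Definition g (k : nat) (x : R) := (- ln (1 - x)) ^ k / INR (fact k).

Lemma g_deriv k x : x < 1 -> is_derive (g (S k)) x (g k x / (1 - x)).
Proof.
  intros Hx. unfold g. auto_derive. lra.
  rewrite <- S_INR. replace (fact k + k * fact k)%nat with (S k * fact k)%nat by (simpl; lia).
  rewrite mult_INR. replace (1 + - x) with (1 - x) by ring.
  pose proof (INR_S_pos k). assert (INR (fact k) <> 0) by (apply INR_fact_neq_0).
  assert (E : match k with 0%nat => 1 | S _ => INR (S k) end = INR (S k)) by (destruct k; reflexivity).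
  rewrite E. field. repeat split; lra.
Qed.

Lemma g0 x : g 0 x = 1.
Proof. unfold g. simpl. field. Qed.

Lemma g_at0 k : g (S k) 0 = 0.
Proof. unfold g. rewrite Rminus_0_r, ln_1, Ropp_0, pow_i by lia. unfold Rdiv. ring. Qed.

Lemma nzl_repeat1 k : nzl (repeat 1%Z k).
Proof. induction k; constructor; auto; lia. Qed.

Lemma F_ones k x : -1 < x < 1 -> F (repeat 1%Z k) x = g k x.
Proof.
  revert x. induction k; intros x Hx.
  - unfold F. simpl. rewrite PSeries_nil by (apply Rabs_def1; lra). unfold g. simpl. field.
  - assert (H : forall y, -1 < y < 1 -> is_derive (fun y => F (repeat 1%Z (S k)) y - g (S k) y) y 0).
    { intros y Hy. replace 0 with (g k y / (1 - y) - g k y / (1 - y)) by ring.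
      apply (is_derive_minus (F (repeat 1%Z (S k))) (g (S k))). 2: apply g_deriv; lra.
      replace (g k y / (1 - y)) with (PSeries (PS_derive (cf (repeat 1%Z (S k)))) y).
      apply F_deriv. apply nzl_repeat1. apply Rabs_def1; lra.
      rewrite <- (IHk y Hy). unfold F. rewrite <- (rel1 (repeat 1%Z k) y). simpl. field. lra.
      apply nzl_repeat1. apply Rabs_def1; lra. }
    assert (H0 : -1 < 0 < 1) by lra. pose proof (const_on _ (-1) 1 H x 0 Hx H0) as E. simpl in E.
    unfold F in E at 2. rewrite PSeries_0 in E. simpl in E. rewrite g_at0 in E. simpl. lra.
Qed.

Section Lims.
Context {T : Type} {F : (T -> Prop) -> Prop} {FF : Filter F}.

Lemma lim_mult (f g : T -> R) a b : filterlim f F (locally a) -> filterlim g F (locally b) ->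
  filterlim (fun x => f x * g x) F (locally (a * b)).
Proof.
  intros Hf Hg. eapply filterlim_comp_2; eauto. apply (filterlim_mult (K := R_AbsRing) a b).
Qed.

Lemma lim_plus (f g : T -> R) a b : filterlim f F (locally a) -> filterlim g F (locally b) ->
  filterlim (fun x => f x + g x) F (locally (a + b)).
Proof.
  intros Hf Hg. eapply filterlim_comp_2; eauto. apply (filterlim_plus (K := R_AbsRing) (V := R_NormedModule) a b).
Qed.

Lemma lim_const (c : R) : filterlim (fun _ : T => c) F (locally c).
Proof. apply filterlim_const. Qed.

Lemma lim_ext (f g : T -> R) l : F (fun x => f x = g x) -> filterlim f F (locally l) -> filterlim g F (locally l).
Proof. intros H Hf. eapply filterlim_ext_loc; eauto. Qed.

Lemma lim_sum (f : nat -> T -> R) (l : nat -> R) n :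
  (forall j, (j <= n)%nat -> filterlim (f j) F (locally (l j))) ->
  filterlim (fun x => sum_f_R0 (fun j => f j x) n) F (locally (sum_f_R0 l n)).
Proof.
  induction n; intros H; simpl. apply H; lia.
  apply lim_plus. apply IHn. intros; apply H; lia. apply H; lia.
Qed.

Lemma lim_pow (f : T -> R) a k : filterlim f F (locally a) -> filterlim (fun x => f x ^ k) F (locally (a ^ k)).
Proof.
  intros Hf. induction k; simpl. apply lim_const. apply lim_mult; auto.
Qed.
End Lims.

Lemma lim_cont (f : R -> R) x : continuity_pt f x -> filterlim f (locally x) (locally (f x)).
Proof. intros; apply continuity_pt_filterlim; auto. Qed.

Lemma bounded_eventually (u : nat -> R) N B : (forall n, (N <= n)%nat -> Rabs (u n) <= B) ->
  exists M, forall n, Rabs (u n) <= M.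
Proof.
  revert B. induction N; intros B H.
  - exists B. intros; apply H; lia.
  - apply (IHN (Rmax B (Rabs (u N)))). intros n Hn.
    destruct (Nat.eq_dec n N) as [->|Hne]. apply Rmax_r.
    eapply Rle_trans. apply H; lia. apply Rmax_l.
Qed.

Lemma radius_ge1 (a : nat -> R) : ex_series a -> Rbar_le 1 (CV_radius a).
Proof.
  intros Ha. apply ex_series_lim_0 in Ha.
  apply is_lim_seq_spec in Ha. destruct (Ha (mkposreal 1 Rlt_0_1)) as [N HN].
  destruct (bounded_eventually a N 1) as [M HM].
  { intros n Hn. specialize (HN n Hn). simpl in HN. rewrite Rminus_0_r in HN. lra. }
  destruct (CV_radius_bounded a) as [Hub _]. apply Hub. exists M. intros n.
  rewrite pow1, Rmult_1_r. auto.
Qed.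

Lemma PSeries_1 (a : nat -> R) : PSeries a 1 = Series a.
Proof. unfold PSeries. apply Series_ext. intros n. rewrite pow1. ring. Qed.

Lemma abel_gen (a : nat -> R) : ex_series a -> filterlim (PSeries a) (at_left 1) (locally (Series a)).
Proof.
  intros Ha. pose proof (radius_ge1 a Ha) as Hr.
  assert (Hcont : Rbar_lt 1 (CV_radius a) -> filterlim (PSeries a) (at_left 1) (locally (Series a))).
  { intros Hlt. rewrite <- PSeries_1. eapply filterlim_filter_le_1. apply filter_le_within.
    apply lim_cont. apply PSeries_continuity. rewrite Rabs_R1. auto. }
  destruct (CV_radius a) as [r| |] eqn:E; simpl in Hr.
  - destruct (Req_dec r 1) as [->|Hne].
    + rewrite <- PSeries_1. pose proof (Abel a) as HA. rewrite E in HA. simpl in HA.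
      apply HA; simpl; auto. lra.
      unfold ex_pseries. eapply ex_series_ext. 2: apply Ha. intros n.
      rewrite pow_n_pow, pow1. unfold scal; simpl; unfold mult; simpl. ring.
    + apply Hcont. simpl. lra.
  - apply Hcont. simpl. auto.
  - contradiction.
Qed.

Definition Li (s : nat) (v : R) := F (Z.of_nat s :: nil) v.
Definition Lis (s : nat) (v : R) := match s with O => v / (1 - v) | _ => Li s v end.

Lemma nzl_single s : (1 <= s)%nat -> nzl (Z.of_nat s :: nil).
Proof. intros; constructor; [lia|constructor]. Qed.

Lemma Li1 v : -1 < v < 1 -> Li 1 v = - ln (1 - v).
Proof. intros Hv. unfold Li. pose proof (F_ones 1 v Hv) as E. simpl in E. simpl. rewrite E. unfold g. simpl. field. Qed.

Lemma Li_deriv s v : (1 <= s)%nat -> 0 < v < 1 -> is_derive (Li (S s)) v (Li s v / v).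
Proof.
  intros Hs Hv. unfold Li.
  replace (F (Z.of_nat s :: nil) v / v) with (PSeries (PS_derive (cf (Z.of_nat (S s) :: nil))) v).
  apply F_deriv. apply nzl_single; lia. rewrite Rabs_pos_eq; lra.
  unfold F. rewrite <- rel2 by auto. field. lra.
Qed.

Lemma Lis_deriv s v : (1 <= s)%nat -> 0 < v < 1 -> is_derive (Lis s) v (Lis (s - 1) v / v).
Proof.
  intros Hs Hv. destruct s as [|[|s]]; [lia| |].
  - simpl. eapply is_derive_ext_loc.
    + exists (mkposreal (1 - v) ltac:(simpl; lra)). intros y Hy.
      unfold ball in Hy; simpl in Hy; unfold AbsRing_ball, abs, minus, plus, opp in Hy; simpl in Hy.
      apply Rabs_def2 in Hy. symmetry. apply Li1. lra.
    + auto_derive. lra. field. lra.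
  - replace (S (S s) - 1)%nat with (S s) by lia. apply Li_deriv; auto. lia.
Qed.

Lemma Lis_comp_deriv s x : (1 <= s)%nat -> 0 < x < 1 ->
  is_derive (fun x => Lis s (1 - x)) x (- (Lis (s - 1) (1 - x) / (1 - x))).
Proof.
  intros Hs Hx.
  replace (- (Lis (s - 1) (1 - x) / (1 - x))) with (scal (-1) (Lis (s - 1) (1 - x) / (1 - x))).
  apply (is_derive_comp (Lis s) (fun x => 1 - x)). apply Lis_deriv; auto. lra.
  auto_derive. auto. ring.
  unfold scal; simpl; unfold mult; simpl. ring.
Qed.

Definition T (n a : nat) (x : R) := sum_f_R0 (fun l => g (n - l) x * Lis (a + l) (1 - x)) n.

Lemma T_S n a x : T (S n) a x = g (S n) x * Lis a (1 - x) + T n (S a) x.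
Proof.
  unfold T. rewrite decomp_sum by lia. simpl pred. f_equal.
  - rewrite Nat.sub_0_r, Nat.add_0_r. reflexivity.
  - apply sum_eq. intros i Hi. f_equal. f_equal. lia.
Qed.

Lemma T_0 a x : T 0 a x = Lis a (1 - x).
Proof. unfold T. simpl. rewrite Nat.add_0_r. unfold g. simpl. field. Qed.

Lemma is_derive_Rmult (f h : R -> R) x df dh : is_derive f x df -> is_derive h x dh ->
  is_derive (fun t => f t * h t) x (df * h x + f x * dh).
Proof.
  intros. apply (is_derive_mult f h x df dh); auto. intros; apply Rmult_comm.
Qed.

Lemma is_derive_Rplus (f h : R -> R) x df dh : is_derive f x df -> is_derive h x dh ->
  is_derive (fun t => f t + h t) x (df + dh).
Proof. intros. apply (is_derive_plus f h x df dh); auto. Qed.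

Lemma T_deriv n a x : (1 <= a)%nat -> 0 < x < 1 ->
  is_derive (T n a) x (- (g n x * Lis (a - 1) (1 - x) / (1 - x))).
Proof.
  revert a. induction n; intros a Ha Hx.
  - eapply is_derive_ext. intros t. symmetry. apply T_0.
    replace (- (g 0 x * Lis (a - 1) (1 - x) / (1 - x))) with (- (Lis (a - 1) (1 - x) / (1 - x))).
    apply Lis_comp_deriv; auto. unfold g; simpl. field. lra.
  - eapply is_derive_ext. intros t. symmetry. apply T_S.
    replace (- (g (S n) x * Lis (a - 1) (1 - x) / (1 - x))) with
      ((g n x / (1 - x) * Lis a (1 - x) + g (S n) x * (- (Lis (a - 1) (1 - x) / (1 - x))))
        + (- (g n x * Lis (S a - 1) (1 - x) / (1 - x)))).
    apply is_derive_Rplus. apply (is_derive_Rmult (g (S n)) (fun t => Lis a (1 - t))). apply g_deriv; lra. apply Lis_comp_deriv; auto.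
    apply IHn; auto.
    replace (S a - 1)%nat with a by lia. field. lra.
Qed.

Definition Phi (m : nat) (x : R) := F (2%Z :: repeat 1%Z m) x + T (S m) 1 x.

Lemma nzl_21 m : nzl (2%Z :: repeat 1%Z m).
Proof. constructor. lia. apply nzl_repeat1. Qed.

Lemma F21_deriv m x : 0 < x < 1 -> is_derive (F (2%Z :: repeat 1%Z m)) x (g (S m) x / x).
Proof.
  intros Hx. replace (g (S m) x / x) with (PSeries (PS_derive (cf (2%Z :: repeat 1%Z m))) x).
  apply F_deriv. apply nzl_21. rewrite Rabs_pos_eq; lra.
  rewrite <- (F_ones (S m) x) by lra. unfold F.
  pose proof (rel2 1 (repeat 1%Z m) x) as E. simpl in E. simpl. rewrite <- E by lia. field. lra.
Qed.

Lemma Phi_deriv m x : 0 < x < 1 -> is_derive (Phi m) x 0.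
Proof.
  intros Hx. unfold Phi.
  replace 0 with (g (S m) x / x + (- (g (S m) x * Lis (1 - 1) (1 - x) / (1 - x)))).
  apply is_derive_Rplus. apply F21_deriv; auto. apply T_deriv; auto.
  simpl. replace (1 - (1 - x)) with x by ring. field. lra.
Qed.

Lemma Phi_const m x : 0 < x < 1 -> Phi m x = Phi m (1/2).
Proof.
  intros Hx. apply (const_on (Phi m) 0 1); auto. intros; apply Phi_deriv; auto. lra.
Qed.

Lemma at_right_01 : at_right 0 (fun x => 0 < x < 1).
Proof.
  exists (mkposreal 1 Rlt_0_1). intros y Hy Hpos.
  unfold ball in Hy; simpl in Hy; unfold AbsRing_ball, abs, minus, plus, opp in Hy; simpl in Hy.
  apply Rabs_def2 in Hy. lra.
Qed.

Lemma xlnx : filterlim (fun x => x * (- ln x)) (at_right 0) (locally 0).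
Proof.
  pose proof is_lim_div_ln_p as H. unfold is_lim in H.
  assert (H2 : filterlim (fun x => ln (/ x) / (/ x)) (at_right 0) (Rbar_locally 0)).
  { apply (filterlim_comp _ _ _ Rinv (fun y => ln y / y) (at_right 0) (Rbar_locally p_infty) (Rbar_locally 0)). apply filterlim_Rinv_0_right. exact H. }
  simpl in H2. eapply lim_ext. 2: exact H2.
  eapply filter_imp. 2: apply at_right_01. intros x Hx. simpl.
  rewrite ln_Rinv by lra. field. lra.
Qed.

Lemma lim_1mx : filterlim (fun x => 1 - x) (at_right 0) (at_left 1).
Proof.
  intros P [eps HP]. exists eps. intros y Hy Hpos. apply HP.
  unfold ball in *; simpl in *; unfold AbsRing_ball, abs, minus, plus, opp in *; simpl in *.
  replace (1 - y + - (1)) with (- (y + - 0)) by ring. rewrite Rabs_Ropp. auto. lra.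
Qed.

Lemma cf_single_S s n : (1 <= s)%nat -> cf (Z.of_nat s :: nil) (S n) = / INR (S n) ^ s.
Proof.
  intros Hs. change (cf (Z.of_nat s :: nil) (S n)) with (mzv_term (Z.of_nat s) (S n) * nsum nil n).
  rewrite mzv_term_pos by lia. rewrite Nat2Z.id. simpl nsum. ring.
Qed.

Lemma ex_series_tele : ex_series (fun k => 2 / (INR k + 1) - 2 / (INR k + 2)).
Proof.
  exists 2. unfold is_series.
  assert (E : forall N, @eq R (sum_n (fun k => 2 / (INR k + 1) - 2 / (INR k + 2)) N) (2 - 2 / (INR N + 2))).
  { induction N. rewrite sum_O. change (INR 0) with 0. field.
    rewrite sum_SnR, IHN. rewrite S_INR. field. pose proof (pos_INR N). split; lra. }
  eapply filterlim_ext. intros N. symmetry. apply E.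
  change (is_lim_seq (fun N => 2 - 2 / (INR N + 2)) (Finite 2)).
  assert (H1 : is_lim_seq (fun n => INR n + 2) p_infty).
  { eapply is_lim_seq_plus. apply is_lim_seq_INR. apply is_lim_seq_const. reflexivity. }
  assert (H2 : is_lim_seq (fun n => / (INR n + 2)) 0).
  { pose proof (is_lim_seq_inv _ _ H1) as H. simpl in H. apply H. discriminate. }
  assert (H3 : is_lim_seq (fun N => 2 - 2 * / (INR N + 2)) (2 - 2 * 0)).
  { apply is_lim_seq_minus'. apply is_lim_seq_const. apply (is_lim_seq_mult' (fun _ => 2) _ 2 0). apply is_lim_seq_const. exact H2. }
  replace (2 - 2 * 0) with 2 in H3 by ring. exact H3.
Qed.

Lemma ex_zeta s : (2 <= s)%nat -> ex_series (cf (Z.of_nat s :: nil)).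
Proof.
  intros Hs. apply ex_series_incr_1.
  eapply (ex_series_le (K:=R_AbsRing) (V:=R_CompleteNormedModule)). 2: apply ex_series_tele.
  intros n. rewrite cf_single_S by lia. rewrite S_INR. unfold norm; simpl; unfold abs; simpl.
  pose proof (pos_INR n) as Hn.
  rewrite Rabs_pos_eq. 2: { left. apply Rinv_0_lt_compat. apply pow_lt. lra. }
  apply Rle_trans with (/ (INR n + 1) ^ 2).
  - apply Rinv_le_contravar. apply pow_lt; lra.
    apply Rle_pow. lra. auto.
  - replace (2 / (INR n + 1) - 2 / (INR n + 2)) with (2 / ((INR n + 1) * (INR n + 2))) by (field; lra).
    simpl. rewrite Rmult_1_r.
    apply Rmult_le_reg_l with ((INR n + 1) * (INR n + 1) * (INR n + 2)). nra.
    field_simplify; lra.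
Qed.

Definition Zeta (s : nat) := Series (cf (Z.of_nat s :: nil)).

Lemma Li_lim s : (2 <= s)%nat -> filterlim (fun x => Li s (1 - x)) (at_right 0) (locally (Zeta s)).
Proof.
  intros Hs. unfold Li, F, Zeta.
  apply (filterlim_comp _ _ _ (fun x => 1 - x) (PSeries (cf (Z.of_nat s :: nil))) (at_right 0) (at_left 1)).
  apply lim_1mx. apply abel_gen. apply ex_zeta; auto.
Qed.

Lemma F21_lim m : filterlim (F (2%Z :: repeat 1%Z m)) (at_right 0) (locally 0).
Proof.
  replace 0 with (F (2%Z :: repeat 1%Z m) 0) at 2.
  eapply filterlim_filter_le_1. apply filter_le_within.
  apply lim_cont. apply PSeries_continuity. apply cf_inside. apply nzl_21. rewrite Rabs_R0; lra.
  unfold F. rewrite PSeries_0. reflexivity.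
Qed.

Lemma g_lim j : filterlim (g j) (at_right 0) (locally (g j 0)).
Proof.
  eapply filterlim_filter_le_1. apply filter_le_within.
  destruct j as [|k].
  - eapply filterlim_ext. intros x. symmetry. apply (g0 x). rewrite g0. apply filterlim_const.
  - apply (ex_derive_continuous (K:=R_AbsRing) (V:=R_NormedModule) (g (S k)) 0).
    eexists. apply g_deriv. lra.
Qed.

Lemma lim_id : filterlim (fun x : R => x) (at_right 0) (locally 0).
Proof. eapply filterlim_filter_le_1. apply filter_le_within. apply filterlim_id. Qed.

Definition q1 := PSeries (PS_decr_1 (cf (1%Z :: nil))).

Lemma q1_lim : filterlim q1 (at_right 0) (locally (q1 0)).
Proof.
  eapply filterlim_filter_le_1. apply filter_le_within.
  apply lim_cont. apply PSeries_continuity. rewrite CV_radius_decr_1.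
  apply (cf_inside (1%Z :: nil)). constructor. lia. constructor. rewrite Rabs_R0; lra.
Qed.

Lemma last_lim m : filterlim (fun x => g (S m) x * Lis 1 (1 - x)) (at_right 0) (locally 0).
Proof.
  eapply lim_ext with (f := fun x => q1 x ^ (S m) * x ^ m * (x * (- ln x)) * / INR (fact (S m))).
  - eapply filter_imp. 2: apply at_right_01. intros x Hx.
    change (Lis 1 (1 - x)) with (Li 1 (1 - x)). rewrite Li1 by lra.
    replace (1 - (1 - x)) with x by ring.
    unfold g. rewrite <- Li1 by lra. unfold Li, F.
    rewrite (PSeries_decr_1_aux (cf (Z.of_nat 1 :: nil))) by reflexivity.
    unfold q1. change (Z.of_nat 1) with 1%Z. rewrite Rpow_mult_distr, <- (tech_pow_Rmult x m). field. apply INR_fact_neq_0.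
  - replace 0 with (q1 0 ^ S m * 0 ^ m * 0 * / INR (fact (S m))) at 2 by ring.
    apply lim_mult. 2: apply lim_const.
    apply lim_mult. apply lim_mult. apply lim_pow. apply q1_lim. apply lim_pow. apply lim_id.
    apply xlnx.
Qed.

Lemma Phi_lim m : filterlim (Phi m) (at_right 0) (locally (Zeta (S (S m)))).
Proof.
  unfold Phi. replace (Zeta (S (S m))) with
    (0 + sum_f_R0 (fun l => if Nat.eqb l 0 then 0 else g (S m - l) 0 * Zeta (1 + l)) (S m)).
  apply lim_plus. apply F21_lim.
  unfold T. apply (lim_sum (fun l x => g (S m - l) x * Lis (1 + l) (1 - x))).
  intros j Hj. destruct j as [|j].
  - simpl Nat.eqb. cbv iota. rewrite Nat.sub_0_r. apply last_lim.
  - simpl Nat.eqb. cbv iota. apply lim_mult. apply g_lim.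
    change (Lis (1 + S j)) with (Li (S (S j))). apply Li_lim. lia.
  - rewrite tech5. rewrite sum_eq_R0.
    + simpl Nat.eqb. cbv iota. rewrite Nat.sub_diag. rewrite g0. ring_simplify. reflexivity.
    + intros [|l] Hl. reflexivity. simpl Nat.eqb. cbv iota.
      replace (S m - S l)%nat with (S (m - S l)) by lia. rewrite g_at0. ring.
Qed.

Lemma Phi_half m : Phi m (1/2) = Zeta (S (S m)).
Proof.
  apply (filterlim_locally_unique (F := at_right 0) (Phi m)).
  - apply lim_ext with (f := fun _ => Phi m (1/2)). eapply filter_imp. 2: apply at_right_01.
    intros x Hx. symmetry. apply Phi_const. auto. apply lim_const.
  - apply Phi_lim.
Qed.

Lemma key_sqrt (N : nat) : 2 * sqrt (INR N) + / sqrt (INR (S N)) <= 2 * sqrt (INR (S N)).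
Proof.
  pose proof (pos_INR N) as HN. rewrite S_INR.
  set (a := sqrt (INR N)). set (b := sqrt (INR N + 1)).
  assert (Ha : 0 <= a) by apply sqrt_pos.
  assert (Hb : 0 < b) by (apply sqrt_lt_R0; lra).
  assert (Ha2 : a * a = INR N) by (apply sqrt_sqrt; lra).
  assert (Hb2 : b * b = INR N + 1) by (apply sqrt_sqrt; lra).
  assert (1 <= 2 * b * (b - a)) by nra.
  apply Rmult_le_reg_r with b; auto.
  rewrite Rmult_plus_distr_r, Rinv_l by lra. nra.
Qed.

Lemma mzv_term_1 n : mzv_term 1 n = / INR n.
Proof. rewrite mzv_term_pos by lia. change (Z.to_nat 1) with 1%nat. rewrite pow_1. reflexivity. Qed.

Lemma sqrt_div (N : nat) : sqrt (INR (S N)) / INR (S N) = / sqrt (INR (S N)).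
Proof.
  pose proof (INR_S_pos N). assert (0 < sqrt (INR (S N))) by (apply sqrt_lt_R0; lra).
  rewrite <- (sqrt_sqrt (INR (S N))) at 2 by lra. field. lra.
Qed.

Lemma e_stepB k : (forall N, nsum (repeat 1%Z k) N <= 2 ^ k * sqrt (INR (S N))) ->
  forall N, nsum (repeat 1%Z (S k)) N <= 2 ^ (S k) * sqrt (INR N).
Proof.
  intros H N. induction N.
  - simpl. rewrite sqrt_0. lra.
  - simpl repeat. rewrite nsum_S. rewrite mzv_term_1.
    pose proof (key_sqrt N). pose proof (sqrt_div N). specialize (H N).
    assert (0 < 2 ^ k) by (apply pow_lt; lra).
    assert (/ INR (S N) * nsum (repeat 1%Z k) N <= 2 ^ k * / sqrt (INR (S N))).
    { rewrite <- H1. unfold Rdiv.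
      replace (2 ^ k * (sqrt (INR (S N)) * / INR (S N))) with ((2 ^ k * sqrt (INR (S N))) * / INR (S N)) by ring.
      rewrite (Rmult_comm (/ INR (S N))).
      apply Rmult_le_compat_r. left; apply Rinv_0_lt_compat, INR_S_pos. lra. }
    simpl pow in *. simpl repeat in IHN. nra.
Qed.

Lemma e_bound k N : nsum (repeat 1%Z k) N <= 2 ^ k * sqrt (INR (S N)).
Proof.
  revert N. induction k; intros N.
  - simpl repeat. simpl nsum. simpl pow. rewrite Rmult_1_l. rewrite <- sqrt_1. apply sqrt_le_1_alt. rewrite S_INR. pose proof (pos_INR N); lra.
  - eapply Rle_trans. apply e_stepB; auto. apply Rmult_le_compat_l. left; apply pow_lt; lra.
    apply sqrt_le_1_alt. rewrite S_INR; lra.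
Qed.

Lemma nsum_abs s N : nzl s -> Rabs (nsum s N) <= nsum (repeat 1%Z (length s)) N.
Proof.
  revert N. induction s as [|s1 r IH]; intros N Hs.
  - simpl. rewrite Rabs_R1. lra.
  - inversion Hs; subst. induction N.
    + simpl. rewrite Rabs_R0. lra.
    + rewrite nsum_S. simpl length. simpl repeat. rewrite nsum_S.
      eapply Rle_trans. apply Rabs_triang. rewrite Rabs_mult.
      destruct (mzv_term_abs s1 (S N)) as [Hm|Hm]; [lia| |congruence].
      rewrite mzv_term_1. apply Rplus_le_compat. simpl in IHN. exact IHN.
      apply Rmult_le_compat; try apply Rabs_pos. exact Hm. apply IH; auto.
Qed.

Lemma cf_abs s n : nzl s -> Rabs (cf s n) <= cf (repeat 1%Z (length s)) n.
Proof.
  intros Hs. destruct s as [|s1 r].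
  - simpl. destruct (Nat.eqb n 0); rewrite ?Rabs_R1, ?Rabs_R0; lra.
  - inversion Hs; subst. destruct n as [|k]. simpl. rewrite Rabs_R0; lra.
    simpl length. simpl repeat.
    change (cf (s1 :: r) (S k)) with (mzv_term s1 (S k) * nsum r k).
    change (cf (1%Z :: repeat 1%Z (length r)) (S k)) with (mzv_term 1 (S k) * nsum (repeat 1%Z (length r)) k).
    rewrite Rabs_mult. rewrite mzv_term_1.
    destruct (mzv_term_abs s1 (S k)) as [Hm|Hm]; [lia| |congruence].
    apply Rmult_le_compat; try apply Rabs_pos. exact Hm. apply nsum_abs; auto.
Qed.

Lemma inv_INR_S_lim : is_lim_seq (fun n => / INR (S n)) 0.
Proof.
  assert (H : is_lim_seq (fun n => INR (S n)) p_infty).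
  { apply (is_lim_seq_incr_1 INR). apply is_lim_seq_INR. }
  pose proof (is_lim_seq_inv _ _ H) as H2. simpl in H2. apply H2. discriminate.
Qed.

Lemma inv_sqrt_lim : is_lim_seq (fun n => / sqrt (INR (S n))) 0.
Proof.
  eapply is_lim_seq_ext. intros n. apply sqrt_inv.
  unfold is_lim_seq. simpl.
  apply (filterlim_comp _ _ _ (fun n => / INR (S n)) sqrt eventually (locally 0) (locally 0)).
  apply inv_INR_S_lim. rewrite <- sqrt_0 at 2. apply lim_cont. apply continuity_pt_sqrt. lra.
Qed.

Lemma m1_pow n : (-1) ^ n = 1 \/ (-1) ^ n = -1.
Proof. induction n; simpl. auto. destruct IHn as [-> | ->]; [right|left]; ring. Qed.

Lemma alt_series (c : nat -> R) : is_lim_seq c 0 -> ex_series (fun n => Rabs (c (S n) - c n)) ->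
  ex_series (fun n => (-1) ^ n * c n).
Proof.
  intros Hc Hd.
  set (E := fun n : nat => (1 + (-1) ^ n) / 2).
  assert (HE : forall n, 0 <= E n <= 1).
  { intros n. unfold E. destruct (m1_pow n) as [H|H]; rewrite H; lra. }
  set (d := fun n => E n * (c n - c (S n))).
  assert (Hexd : ex_series d).
  { eapply (ex_series_le (K:=R_AbsRing) (V:=R_CompleteNormedModule)). 2: exact Hd.
    intros n. unfold norm; simpl; unfold abs; simpl. unfold d. rewrite Rabs_mult.
    rewrite Rabs_minus_sym. specialize (HE n). rewrite (Rabs_pos_eq (E n)) by lra.
    pose proof (Rabs_pos (c (S n) - c n)). nra. }
  assert (Hid : forall N, @eq R (sum_n (fun n => (-1) ^ n * c n) N) (sum_n d N + E N * c (S N))).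
  { induction N.
    - rewrite !sum_O. unfold d, E. simpl. field.
    - rewrite !sum_SnR, IHN. unfold d, E. simpl pow. field. }
  exists (Series d + 0). unfold is_series.
  eapply filterlim_ext. intros N. symmetry. apply Hid.
  change (is_lim_seq (fun N => sum_n d N + E N * c (S N)) (Finite (Series d + 0))).
  apply is_lim_seq_plus'. apply Series_correct. auto.
  assert (Habs : is_lim_seq (fun n => Rabs (c (S n))) 0).
  { pose proof (is_lim_seq_abs _ _ (proj1 (is_lim_seq_incr_1 c 0) Hc)) as H. simpl in H.
    rewrite Rabs_R0 in H. exact H. }
  apply is_lim_seq_le_le with (u := fun N => - Rabs (c (S N))) (w := fun N => Rabs (c (S N))).
  - intros n. specialize (HE n). pose proof (Rabs_pos (c (S n))).
    split.
    + destruct (Rle_dec 0 (c (S n))). rewrite Rabs_pos_eq in * by lra. nra.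
      rewrite Rabs_left in * by lra. nra.
    + destruct (Rle_dec 0 (c (S n))). rewrite Rabs_pos_eq in * by lra. nra.
      rewrite Rabs_left in * by lra. nra.
  - pose proof (proj1 (is_lim_seq_opp _ _) Habs) as H. simpl in H. replace (- 0) with 0 in H by ring. exact H.
  - exact Habs.
Qed.

Definition sm (m : nat) := repeat 1%Z m ++ (-1)%Z :: nil.

Lemma nzl_sm m : nzl (sm m).
Proof. unfold sm, nzl. apply Forall_app. split. apply nzl_repeat1. constructor. lia. constructor. Qed.

Lemma length_sm m : length (sm m) = S m.
Proof. unfold sm. rewrite length_app, repeat_length. simpl. lia. Qed.

Definition cc m n := cf (1%Z :: sm m) n.

Lemma cc_S m n : cc m (S n) = / INR (S n) * nsum (sm m) n.
Proof. unfold cc. change (cf (1%Z :: sm m) (S n)) with (mzv_term 1 (S n) * nsum (sm m) n). rewrite mzv_term_1. reflexivity. Qed.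

Lemma A_bound m n : Rabs (nsum (sm m) n) <= 2 ^ (S m) * sqrt (INR (S n)).
Proof.
  eapply Rle_trans. apply nsum_abs. apply nzl_sm. rewrite length_sm. apply e_bound.
Qed.

Lemma cc_bound m n : Rabs (cc m (S n)) <= 2 ^ (S m) * / sqrt (INR (S n)).
Proof.
  rewrite cc_S, Rabs_mult. pose proof (INR_S_pos n).
  rewrite Rabs_pos_eq by (left; apply Rinv_0_lt_compat; lra).
  rewrite <- sqrt_div. unfold Rdiv.
  replace (2 ^ S m * (sqrt (INR (S n)) * / INR (S n))) with (/ INR (S n) * (2 ^ S m * sqrt (INR (S n)))) by ring.
  apply Rmult_le_compat_l. left; apply Rinv_0_lt_compat; lra. apply A_bound.
Qed.

Lemma cc_lim m : is_lim_seq (cc m) 0.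
Proof.
  apply is_lim_seq_incr_1.
  assert (H : is_lim_seq (fun n => 2 ^ S m * / sqrt (INR (S n))) 0).
  { replace (Finite 0) with (Finite (2 ^ S m * 0)) by (f_equal; ring).
    apply (is_lim_seq_mult' (fun _ => 2 ^ S m)). apply is_lim_seq_const. apply inv_sqrt_lim. }
  apply is_lim_seq_le_le with (u := fun n => - (2 ^ S m * / sqrt (INR (S n)))) (w := fun n => 2 ^ S m * / sqrt (INR (S n))).
  - intros n. pose proof (cc_bound m n) as H0. apply Rabs_le_between in H0. lra.
  - pose proof (proj1 (is_lim_seq_opp _ _) H) as H'. simpl in H'. replace (- 0) with 0 in H' by ring. exact H'.
  - exact H.
Qed.

Lemma tele_sqrt : ex_series (fun n => / sqrt (INR (S n)) - / sqrt (INR (S (S n)))).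
Proof.
  exists (1 - 0). unfold is_series.
  assert (E : forall N, @eq R (sum_n (fun n => / sqrt (INR (S n)) - / sqrt (INR (S (S n)))) N)
     (1 - / sqrt (INR (S (S N))))).
  { induction N. rewrite sum_O. change (INR 1) with 1. rewrite sqrt_1, Rinv_1. ring.
    rewrite sum_SnR, IHN. ring. }
  eapply filterlim_ext. intros N. symmetry. apply E.
  change (is_lim_seq (fun N => 1 - / sqrt (INR (S (S N)))) (Finite (1 - 0))).
  apply is_lim_seq_minus'. apply is_lim_seq_const.
  apply (is_lim_seq_incr_1 (fun n => / sqrt (INR (S n)))). apply inv_sqrt_lim.
Qed.

Lemma diff_bound m n : Rabs (cc m (S (S n)) - cc m (S n)) <=
  (3 * 2 ^ m * 2) * (/ sqrt (INR (S n)) - / sqrt (INR (S (S n)))).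
Proof.
  rewrite !cc_S. rewrite nsum_cf, sum_SnR, <- nsum_cf.
  set (A := nsum (sm m) n). set (D := cf (sm m) (S n)).
  assert (HA : Rabs A <= 2 ^ S m * sqrt (INR (S n))) by apply A_bound.
  assert (HD : Rabs D <= / INR (S n) * (2 ^ m * sqrt (INR (S n)))).
  { eapply Rle_trans. apply cf_abs. apply nzl_sm. rewrite length_sm. simpl repeat.
    change (cf (1%Z :: repeat 1%Z m) (S n)) with (mzv_term 1 (S n) * nsum (repeat 1%Z m) n).
    rewrite mzv_term_1. apply Rmult_le_compat_l. left; apply Rinv_0_lt_compat, INR_S_pos.
    apply e_bound. }
  rewrite (S_INR (S n)) in *. rewrite S_INR in *.
  pose proof (pos_INR n) as Hn.
  set (a := sqrt (INR n + 1)) in *. set (b := sqrt (INR n + 1 + 1)) in *.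
  assert (Ha : 0 < a) by (apply sqrt_lt_R0; lra).
  assert (Hb : 0 < b) by (apply sqrt_lt_R0; lra).
  assert (Ha2 : a * a = INR n + 1) by (apply sqrt_sqrt; lra).
  assert (Hb2 : b * b = INR n + 1 + 1) by (apply sqrt_sqrt; lra).
  assert (Hab : a < b) by (apply sqrt_lt_1_alt; lra).
  replace (/ (INR n + 1 + 1) * (A + D) - / (INR n + 1) * A) with
    (D / (INR n + 1 + 1) - A / ((INR n + 1) * (INR n + 1 + 1))) by (field; lra).
  set (K := 2 ^ m). assert (HK : 0 < K) by (apply pow_lt; lra).
  change (2 ^ S m) with (2 * K) in HA.
  assert (E1 : Rabs (D / (INR n + 1 + 1)) <= K / (a * b * b)).
  { unfold Rdiv. rewrite Rabs_mult. rewrite (Rabs_pos_eq (/ _)) by (left; apply Rinv_0_lt_compat; lra).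
    rewrite <- Ha2 in HD. rewrite <- Hb2.
    replace (K * / (a * b * b)) with ((/ (a * a) * (K * a)) * / (b * b)) by (field; lra).
    apply Rmult_le_compat_r. left; apply Rinv_0_lt_compat; nra. exact HD. }
  assert (E2 : Rabs (A / ((INR n + 1) * (INR n + 1 + 1))) <= 2 * K / (a * b * b)).
  { unfold Rdiv. rewrite Rabs_mult. rewrite (Rabs_pos_eq (/ _)) by (left; apply Rinv_0_lt_compat; nra).
    rewrite <- Hb2, <- Ha2.
    replace (2 * K * / (a * b * b)) with ((2 * K * a) * / (a * a * (b * b))) by (field; lra).
    apply Rmult_le_compat_r. left; apply Rinv_0_lt_compat; nra. exact HA. }
  eapply Rle_trans. unfold Rminus at 1. eapply Rle_trans. apply Rabs_triang. rewrite Rabs_Ropp.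
  apply Rplus_le_compat; [exact E1|exact E2].
  assert (Hkey : / b <= 2 * (b - a)).
  { apply Rmult_le_reg_r with b; auto. rewrite Rinv_l by lra. nra. }
  replace (K / (a * b * b) + 2 * K / (a * b * b)) with (3 * K * (/ a) * (/ b * / b)) by (field; lra).
  replace (3 * K * 2 * (/ a - / b)) with (3 * K * (/ a) * (2 * (b - a) / b)) by (field; lra).
  apply Rmult_le_compat_l. assert (0 < / a) by (apply Rinv_0_lt_compat; lra). nra.
  unfold Rdiv. apply Rmult_le_compat_r. left; apply Rinv_0_lt_compat; lra. exact Hkey.
Qed.

Lemma cc_diff m : ex_series (fun n => Rabs (cc m (S n) - cc m n)).
Proof.
  apply ex_series_incr_1.
  eapply (ex_series_le (K:=R_AbsRing) (V:=R_CompleteNormedModule)).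
  2: { apply (ex_series_scal_l (K:=R_AbsRing) (V:=R_NormedModule) (3 * 2 ^ m * 2)). apply tele_sqrt. }
  intros n. unfold norm; simpl; unfold abs; simpl. rewrite Rabs_Rabsolu.
  unfold scal; simpl; unfold mult; simpl. apply diff_bound.
Qed.

Lemma alt_cf m n : cf ((-1)%Z :: sm m) n = (-1) ^ n * cc m n.
Proof.
  destruct n as [|n]. unfold cc. simpl. ring.
  rewrite cc_S. change (cf ((-1)%Z :: sm m) (S n)) with (mzv_term (-1) (S n) * nsum (sm m) n).
  unfold mzv_term. change ((0 <? -1)%Z) with false. cbv iota. change (Z.abs_nat (-1)) with 1%nat. rewrite pow_1.
  unfold Rdiv. ring.
Qed.

Lemma ex_alt m : ex_series (cf ((-1)%Z :: sm m)).
Proof.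
  eapply ex_series_ext. intros n. symmetry. apply alt_cf.
  apply alt_series. apply cc_lim. apply cc_diff.
Qed.

Definition P (k : nat) (u : R) :=
  sum_f_R0 (fun l => Li (S l) (1/2) * (ln (2 * u)) ^ (k - l) / INR (fact (k - l))) k.

Definition RHS (k : nat) (u : R) := (-1) ^ k * (Li (S k) u - P k u).

Lemma is_derive_sum (f : nat -> R -> R) (df : nat -> R) n x :
  (forall i, (i <= n)%nat -> is_derive (f i) x (df i)) ->
  is_derive (fun y => sum_f_R0 (fun i => f i y) n) x (sum_f_R0 df n).
Proof.
  induction n; intros H; simpl.
  - apply H; lia.
  - apply (is_derive_Rplus (fun y => sum_f_R0 (fun i => f i y) n) (f (S n))).
    apply IHn; intros; apply H; lia. apply H; lia.
Qed.

Lemma pow_ln_deriv j u : 0 < u ->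
  is_derive (fun y => (ln (2 * y)) ^ (S j) / INR (fact (S j))) u ((ln (2 * u)) ^ j / INR (fact j) / u).
Proof.
  intros Hu. auto_derive. lra.
  replace (fact j + j * fact j)%nat with (S j * fact j)%nat by (simpl; lia).
  rewrite mult_INR.
  assert (E : match j with 0%nat => 1 | S _ => INR j + 1 end = INR (S j)) by (destruct j; simpl; [ring|reflexivity]).
  rewrite E. pose proof (INR_S_pos j). pose proof (INR_fact_neq_0 j). field. lra.
Qed.

Lemma sum_mult_r (f : nat -> R) c n : sum_f_R0 (fun i => f i * c) n = sum_f_R0 f n * c.
Proof. induction n; simpl. ring. rewrite IHn. ring. Qed.

Lemma P_deriv k u : 0 < u -> is_derive (P (S k)) u (P k u / u).
Proof.
  intros Hu.
  replace (P k u / u) with (sum_f_R0 (fun l => Li (S l) (1/2) * ((ln (2 * u)) ^ (k - l) / INR (fact (k - l)) / u)) k + 0).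
  2: { unfold P. rewrite Rplus_0_r. unfold Rdiv. rewrite <- sum_mult_r. apply sum_eq. intros i Hi. ring. }
  unfold P. eapply is_derive_ext. intros y. symmetry. apply tech5.
  apply (is_derive_Rplus (fun y => sum_f_R0 (fun l => Li (S l) (1/2) * (ln (2 * y)) ^ (S k - l) / INR (fact (S k - l))) k)
    (fun y => Li (S (S k)) (1 / 2) * ln (2 * y) ^ (S k - S k) / INR (fact (S k - S k)))).
  - apply (is_derive_sum (fun l y => Li (S l) (1/2) * (ln (2 * y)) ^ (S k - l) / INR (fact (S k - l)))).
    intros i Hi. replace (S k - i)%nat with (S (k - i)) by lia.
    apply (is_derive_ext (fun y => Li (S i) (1/2) * ((ln (2 * y)) ^ S (k - i) * / INR (fact (S (k - i)))))).
    intros y. unfold Rdiv. symmetry. apply Rmult_assoc.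
    apply (is_derive_scal (fun y => (ln (2 * y)) ^ S (k - i) * / INR (fact (S (k - i))))).
    apply pow_ln_deriv; auto.
  - rewrite Nat.sub_diag. simpl pow. apply (is_derive_const (K:=R_AbsRing) (V:=R_NormedModule) (Li (S (S k)) (1 / 2) * 1 / INR (fact 0))).
Qed.

Lemma F_sm0 x : -1 < x < 1 -> F (sm 0) x = - ln (1 + x).
Proof.
  intros Hx. unfold F, sm. simpl app.
  rewrite (PSeries_ext_R _ (fun n => (-1) ^ n * cf (1%Z :: nil) n)).
  rewrite PSeries_alt. change (PSeries (cf (1%Z :: nil)) (- x)) with (Li 1 (- x)).
  rewrite Li1 by lra. f_equal. f_equal. ring.
  intros [|n]. simpl. ring.
  change (cf ((-1)%Z :: nil) (S n)) with (mzv_term (-1) (S n) * nsum nil n).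
  change (cf (1%Z :: nil) (S n)) with (mzv_term 1 (S n) * nsum nil n).
  unfold mzv_term. change ((0 <? -1)%Z) with false. change ((0 <? 1)%Z) with true. cbv iota.
  change (Z.abs_nat (-1)) with 1%nat. change (Z.abs_nat 1) with 1%nat. rewrite pow1. unfold Rdiv. ring.
Qed.

Lemma P_half k : P (S k) (1/2) = Li (S (S k)) (1/2).
Proof.
  unfold P. rewrite tech5. rewrite sum_eq_R0.
  - rewrite Nat.sub_diag. simpl. field.
  - intros l Hl. replace (2 * (1/2)) with 1 by field. rewrite ln_1.
    rewrite pow_i by lia. unfold Rdiv. ring.
Qed.

Lemma closed_form k u : 0 < u < 1 -> F (sm k) (1 - 2 * u) = RHS k u.
Proof.
  revert u. induction k; intros u Hu.
  - rewrite F_sm0 by lra. unfold RHS, P. simpl. 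
    change (Li 1 u) with (Li 1 u). rewrite !Li1 by lra.
    replace (1 + (1 - 2 * u)) with (2 * (1 - u)) by ring. rewrite ln_mult by lra.
    replace (1 - 1/2) with (/ 2) by field. rewrite ln_Rinv by lra. field.
  - assert (H : forall v, 0 < v < 1 -> is_derive (fun v => F (sm (S k)) (1 - 2 * v) - RHS (S k) v) v 0).
    { intros v Hv.
      replace 0 with (scal (-2) (RHS k v / (2 * v)) - ((-1) ^ (S k) * (Li (S k) v / v - P k v / v))).
      2: { unfold RHS. unfold scal; simpl; unfold mult; simpl. simpl pow. field. lra. }
      apply (is_derive_minus (fun v => F (sm (S k)) (1 - 2 * v)) (RHS (S k))).
      - apply (is_derive_comp (F (sm (S k))) (fun v => 1 - 2 * v)).
        + replace (RHS k v / (2 * v)) with (PSeries (PS_derive (cf (sm (S k)))) (1 - 2 * v)).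
          apply F_deriv. apply (nzl_sm (S k)). apply Rabs_def1; lra.
          rewrite <- IHk by auto. unfold F. rewrite <- (rel1 (sm k) (1 - 2 * v)).
          change (sm (S k)) with (1%Z :: sm k). field. lra. apply nzl_sm. apply Rabs_def1; lra.
        + auto_derive. auto. ring.
      - unfold RHS. apply (is_derive_scal (fun v => Li (S (S k)) v - P (S k) v)).
        apply (is_derive_minus (Li (S (S k))) (P (S k))).
        apply Li_deriv. lia. auto. apply P_deriv. lra. }
    assert (H0 : 0 < 1/2 < 1) by lra.
    pose proof (const_on _ 0 1 H u (1/2) Hu H0) as E. simpl in E.
    replace (1 - 2 * (1/2)) with 0 in E by field. unfold F in E at 2. rewrite PSeries_0 in E.
    unfold RHS at 2 in E. rewrite P_half in E. 
    change (cf (sm (S k)) 0) with 0 in E. lra.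
Qed.

Definition Zv m := (-1) ^ (S m) * (Zeta (S (S m)) - P (S m) 1).

Lemma at_left_01 : at_left 1 (fun x => 0 < x < 1).
Proof.
  exists (mkposreal 1 Rlt_0_1). intros y Hy Hpos.
  unfold ball in Hy; simpl in Hy; unfold AbsRing_ball, abs, minus, plus, opp in Hy; simpl in Hy.
  apply Rabs_def2 in Hy. lra.
Qed.

Lemma RHS_lim m : filterlim (RHS (S m)) (at_left 1) (locally (Zv m)).
Proof.
  unfold RHS, Zv. apply lim_mult. apply lim_const.
  unfold Rminus. apply lim_plus.
  - unfold Li, F, Zeta. apply abel_gen. apply ex_zeta. lia.
  - replace (- P (S m) 1) with (-1 * P (S m) 1) by ring.
    apply (lim_ext (fun x => -1 * P (S m) x)). apply filter_forall. intros; ring.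
    apply lim_mult. apply lim_const.
    eapply filterlim_filter_le_1. apply filter_le_within.
    apply (ex_derive_continuous (K:=R_AbsRing) (V:=R_NormedModule) (P (S m)) 1).
    eexists. apply P_deriv. lra.
Qed.

Lemma lim_half : filterlim (fun y => (1 + y) / 2) (at_left 1) (at_left 1).
Proof.
  intros Q [eps HQ]. exists eps. intros y Hy Hlt. apply HQ.
  - unfold ball in *; simpl in *; unfold AbsRing_ball, abs, minus, plus, opp in *; simpl in *.
    apply Rabs_def2 in Hy. apply Rabs_def1; lra.
  - lra.
Qed.

Lemma part2_value m : Series (cf ((-1)%Z :: sm m)) = Zv m.
Proof.
  apply (filterlim_locally_unique (F := at_left 1) (PSeries (cf ((-1)%Z :: sm m)))).
  - apply abel_gen. apply ex_alt.
  - apply (lim_ext (fun y => RHS (S m) ((1 + y) / 2))).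
    + eapply filter_imp. 2: apply at_left_01. intros y Hy.
      rewrite <- (closed_form (S m) ((1 + y) / 2)) by lra.
      rewrite (PSeries_ext_R _ (fun n => (-1) ^ n * cc m n)) by apply alt_cf.
      rewrite PSeries_alt. unfold F, cc. f_equal. field.
    + apply (filterlim_comp _ _ _ (fun y => (1 + y) / 2) (RHS (S m)) (at_left 1) (at_left 1)).
      apply lim_half. apply RHS_lim.
Qed.

Lemma li_lim s1 r x : (1 <= s1)%nat -> nzl (Z.of_nat s1 :: map Z.of_nat r) -> Rabs x < 1 ->
  is_lim_seq (li_partial (s1 :: r) x) (F (Z.of_nat s1 :: map Z.of_nat r) x).
Proof.
  intros Hs Hn Hx.
  pose proof (PSeries_correct _ _ (CV_radius_inside _ _ (cf_inside _ _ Hn Hx))) as H.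
  unfold is_pseries, is_series in H.
  eapply is_lim_seq_ext. 2: exact H.
  intros N. rewrite li_partial_cf by auto. apply sum_n_ext. intros n.
  rewrite pow_n_pow. unfold scal; simpl; unfold mult; simpl. ring.
Qed.

Lemma polylog_eq l : polylog (l + 1) (1/2) = Li (S l) (1/2).
Proof.
  unfold polylog, mpolylog. replace (l + 1)%nat with (S l) by lia.
  rewrite (is_lim_seq_unique _ _ (li_lim (S l) nil (1/2) ltac:(lia) (nzl_single (S l) ltac:(lia)) ltac:(rewrite Rabs_pos_eq; lra))).
  reflexivity.
Qed.

Lemma zeta_eq k : (2 <= k)%nat -> zeta k = Zeta k.
Proof.
  intros Hk. unfold zeta, mzv, Zeta, Series. f_equal. apply Lim_seq_ext. intros n. apply nsum_cf.
Qed.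

Lemma map_repeat1 m : map Z.of_nat (repeat 1%nat m) = repeat 1%Z m.
Proof. induction m; simpl; congruence. Qed.

Theorem corollary3p4 (m : nat) :
  let C := zeta (m + 2) -
           sum_f_R0 (fun l => (ln 2) ^ (m + 1 - l) / INR (fact (m + 1 - l))
                              * polylog (l + 1) (1 / 2)) (m + 1) in
  is_lim_seq (li_partial (2%nat :: repeat 1%nat m) (1 / 2)) C /\
  is_lim_seq (nsum ((-1)%Z :: repeat 1%Z m ++ (-1)%Z :: nil)) ((-1) ^ (m + 1) * C).
Proof.
  intros C.
  assert (HC : C = Zeta (S (S m)) - P (S m) 1).
  { unfold C. rewrite zeta_eq by lia. replace (m + 2)%nat with (S (S m)) by lia.
    replace (m + 1)%nat with (S m) by lia. f_equal. unfold P. apply sum_eq. intros l Hl.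
    rewrite polylog_eq. replace (2 * 1) with 2 by ring. unfold Rdiv. ring. }
  split.
  - assert (HL : is_lim_seq (li_partial (2%nat :: repeat 1%nat m) (1 / 2)) (F (2%Z :: repeat 1%Z m) (1/2))).
    { pose proof (li_lim 2 (repeat 1%nat m) (1/2)) as H. rewrite map_repeat1 in H. apply H. lia.
      apply nzl_21. rewrite Rabs_pos_eq; lra. }
    replace C with (F (2%Z :: repeat 1%Z m) (1/2)). exact HL.
    rewrite HC. pose proof (Phi_half m) as E. unfold Phi in E. rewrite <- E.
    assert (T (S m) 1 (1/2) = P (S m) 1).
    { unfold T, P. apply sum_eq. intros l Hl. unfold g.
      replace (1 - 1/2) with (/ 2) by field. rewrite ln_Rinv by lra. rewrite Ropp_involutive.
      replace (2 * 1) with 2 by ring. change (Lis (1 + l)) with (Li (S l)). unfold Rdiv. rewrite Rmult_1_l. ring. }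
    lra.
  - replace ((-1) ^ (m + 1) * C) with (Series (cf ((-1)%Z :: sm m))).
    + eapply is_lim_seq_ext. intros n. symmetry. apply nsum_cf.
      apply (Series_correct (cf ((-1)%Z :: sm m))). apply ex_alt.
    + rewrite part2_value. unfold Zv. rewrite HC. replace (m + 1)%nat with (S m) by lia. reflexivity.
Qed.
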